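(* Let $t>0$. Consider a vehicle and a target with relative state $\Upsilon(k)=(\bm{q}(k),\bm{\vartheta}(k))\in\mathbb{R}^6$ (relative position and relative velocity in the world frame) evolving as $$\Upsilon(k+1)=A\Upsilon(k)+B\big(\bm{R}(k)\,{}^{b}\bm{u}_1(k)-\bar{\bm{u}}(k)\big),\quad A=\begin{bmatrix} I_3& tI_3\\ 0& I_3\end{bmatrix},\ B=\begin{bmatrix}\tfrac12 t^2 I_3\\ tI_3\end{bmatrix},$$ where $\bm{R}(k)\in SO(3)$ is the vehicle orientation and the target acceleration $\bar{\bm{u}}(k)$ is zero-mean Gaussian with covariance $W$ satisfying $\hat\sigma I_3\le W\le \check\sigma I_3$ for some $\hat\sigma,\check\sigma>0$, independent of the other quantities at time $k$. Let $\hat\Upsilon(k)=(\hat{\bm{q}}(k),\hat{\bm{\vartheta}}(k))$ be an estimate of $\Upsilon(k)$, let ${}^{b}\bm{q}^*\in\mathbb{R}^3$ be a desired relative position in the body frame, and apply the tracking control $${}^{b}\bm{u}_1(k)=-\frac{2\alpha}{t^2}\big(\bm{R}^{-1}(k)\hat{\bm{q}}(k)-{}^{b}\bm{q}^*\big)-\frac{2}{t}\bm{R}^{-1}(k)\hat{\bm{\vartheta}}(k).$$ Define the tracking error $\bm{e}(k)=\bm{q}(k)-\bm{R}(k)\,{}^{b}\bm{q}^*$ and $\bar\alpha=(\alpha I_3,\ tI_3)\in\mathbb{R}^{3\times 6}$, and assume $$\sigma:=\sup_k 2\,\mathbf{E}\big\{\|\bar\alpha(\Upsilon(k)-\hat\Upsilon(k))+(\bm{R}(k)-\bm{R}(k+1))\,{}^{b}\bm{q}^*\|^2\big\}<\infty.$$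 If $\alpha\in\big(1-\tfrac{1}{\sqrt2},\,1+\tfrac{1}{\sqrt2}\big)$, then $2(1-\alpha)^2-1<0$ and the tracking error is bounded in mean square: $\mathbf{E}\{\|\bm{e}(k)\|^2\}$ remains bounded for all $k$ (the vehicle maintains the desired relative position ${}^{b}\bm{q}^*$ up to a bounded error).
   Context: $SO(3)$ denotes the group of $3\times 3$ rotation matrices. $\mathbf{E}$ denotes expectation. The estimate $\hat\Upsilon(k)$ is produced by a Kalman filter, but the claim only uses the finiteness of $\sigma$. *)

(* Defs.v *)
From HB Require Import structures.
From mathcomp Require Import all_boot all_order all_algebra.
From mathcomp Require Import all_classical all_reals all_analysis.
Set Implicit Arguments. Unset Strict Implicit. Unset Printing Implicit Defensive.
Import Order.TTheory GRing.Theory Num.Theory.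
Local Open Scope classical_set_scope.
Local Open Scope ring_scope.

Section defs.
Context {R : realType}.

Definition sqnorm n (v : 'cV[R]_n) : R := \sum_(i < n) (v i 0) ^+ 2.

Definition is_SO3 (M : 'M[R]_3) : Prop := M^T *m M = 1%:M /\ \det M = 1.

Definition Amat (t : R) : 'M[R]_(3 + 3) := block_mx 1%:M (t%:M) 0 1%:M.
Definition Bmat (t : R) : 'M[R]_(3 + 3, 3) := col_mx ((t ^+ 2 / 2)%:M) (t%:M).
Definition alphabar (alpha t : R) : 'M[R]_(3, 3 + 3) := row_mx (alpha%:M) (t%:M).

Definition posq (x : 'cV[R]_(3 + 3)) : 'cV[R]_3 := usubmx x.
Definition velq (x : 'cV[R]_(3 + 3)) : 'cV[R]_3 := dsubmx x.

Definition control (alpha t : R) (Rk : 'M[R]_3) (xhat : 'cV[R]_(3 + 3))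
  (bqs : 'cV[R]_3) : 'cV[R]_3 :=
  - ((2 * alpha / t ^+ 2) *: (invmx Rk *m posq xhat - bqs))
  - ((2 / t) *: (invmx Rk *m velq xhat)).

Definition loewner_bounds (W : 'M[R]_3) (s1 s2 : R) : Prop :=
  W^T = W /\
  forall x : 'cV[R]_3,
    s1 * (x^T *m x) 0 0 <= (x^T *m W *m x) 0 0 <= s2 * (x^T *m x) 0 0.

End defs.

Section prob_defs.
Context {d : measure_display} {T : measurableType d} {R : realType}.

(* X : T -> R^3 is zero-mean Gaussian with covariance W (Cramer--Wold form):
   every nonzero linear functional a^T X is N(0, a^T W a). *)
Definition gaussian0 (P : probability T R) (X : T -> 'cV[R]_3) (W : 'M[R]_3) :=
  forall a : 'cV[R]_3, a != 0 ->
    forall A : set R, measurable A ->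
      P ((fun w => (a^T *m X w) 0 0) @^-1` A) =
      normal_prob 0 (Num.sqrt ((a^T *m W *m a) 0 0)) A.

(* independence of two finite families of real random variables
   (independence of the generated sigma-algebras, via the product rule on
   the generating pi-systems) *)
Definition indep_families (I J : finType) (P : probability T R)
  (X : I -> T -> R) (Y : J -> T -> R) : Prop :=
  forall (A : I -> set R) (B : J -> set R),
    (forall i, measurable (A i)) -> (forall j, measurable (B j)) ->
    P ((\bigcap_(i in [set: I]) (X i @^-1` A i)) `&`
       (\bigcap_(j in [set: J]) (Y j @^-1` B j))) =
    (P (\bigcap_(i in [set: I]) (X i @^-1` A i)) *
     P (\bigcap_(j in [set: J]) (Y j @^-1` B j)))%E.

(* the coordinates of the other quantities at time k:
   Upsilon(k), Upsilon_hat(k), R(k), R(k+1) *)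
Definition time_k_coords (Ups Upshat : T -> 'cV[R]_(3 + 3))
  (Rk Rk1 : T -> 'M[R]_3) :
  ('I_(3 + 3) + 'I_(3 + 3) + ('I_3 * 'I_3) + ('I_3 * 'I_3))%type -> T -> R :=
  fun c => match c with
  | inl (inl (inl i)) => fun w => Ups w i 0
  | inl (inl (inr i)) => fun w => Upshat w i 0
  | inl (inr (i, j)) => fun w => Rk w i j
  | inr (i, j) => fun w => Rk1 w i j
  end.

End prob_defs.

(* Main.v *)
Require Import Defs.
From HB Require Import structures.
From mathcomp Require Import all_boot all_order all_algebra.
From mathcomp Require Import all_classical all_reals all_analysis.
From mathcomp Require Import ring lra measurable_realfun.
Import Order.TTheory GRing.Theory Num.Theory.
Local Open Scope classical_set_scope.
Local Open Scope ring_scope.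

Section alg.
Context {R : realType}.

Lemma posqA (t : R) (U : 'cV[R]_(3 + 3)) :
  posq (Amat t *m U) = posq U + t *: velq U.
Proof.
rewrite /posq /velq /Amat -[in LHS](vsubmxK U) mul_block_col col_mxKu.
by rewrite mul1mx mul_scalar_mx.
Qed.

Lemma posqB (t : R) (v : 'cV[R]_3) :
  posq (Bmat t *m v) = (t ^+ 2 / 2) *: v.
Proof. by rewrite /posq /Bmat mul_col_mx col_mxKu mul_scalar_mx. Qed.

Lemma alphabarE (a t : R) (x : 'cV[R]_(3 + 3)) :
  alphabar a t *m x = a *: posq x + t *: velq x.
Proof.
by rewrite /alphabar /posq /velq -[in LHS](vsubmxK x) mul_row_col !mul_scalar_mx.
Qed.

Lemma Rcontrol (a t : R) (Rk : 'M[R]_3) (Uh : 'cV[R]_(3 + 3)) (bqs : 'cV[R]_3) :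
  Rk \in unitmx ->
  Rk *m control a t Rk Uh bqs =
  - ((2 * a / t ^+ 2) *: (posq Uh - Rk *m bqs)) - (2 / t) *: velq Uh.
Proof.
move=> hu.
rewrite /control mulmxBr !mulmxN -!scalemxAr mulmxBr !mulmxA mulmxV // !mul1mx.
done.
Qed.

Lemma step_identity (t a : R) (Rk Rk1 : 'M[R]_3) (U Uh : 'cV[R]_(3 + 3))
  (ub bqs : 'cV[R]_3) : t != 0 -> Rk \in unitmx ->
  posq (Amat t *m U + Bmat t *m (Rk *m control a t Rk Uh bqs - ub)) - Rk1 *m bqs =
  (1 - a) *: (posq U - Rk *m bqs) +
  (alphabar a t *m (U - Uh) + (Rk - Rk1) *m bqs) - (t ^+ 2 / 2) *: ub.
Proof.
move=> t0 hu.
have lin : posq (Amat t *m U + Bmat t *m (Rk *m control a t Rk Uh bqs - ub)) =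
  posq (Amat t *m U) + posq (Bmat t *m (Rk *m control a t Rk Uh bqs - ub)).
  by apply/matrixP => i j; rewrite !mxE.
rewrite lin posqA posqB Rcontrol // alphabarE mulmxBl.
set rb := Rk *m bqs; set rb1 := Rk1 *m bqs.
apply/matrixP => i j; rewrite !mxE.
by field.
Qed.

Lemma sqnorm_step (c1 c2 : R) (e b u : 'cV[R]_3) :
  sqnorm (c1 *: e + b - c2 *: u) <=
  2 * c1 ^+ 2 * sqnorm e + 4 * sqnorm b + 4 * c2 ^+ 2 * sqnorm u.
Proof.
rewrite /sqnorm !mulr_sumr -!big_split /=; apply: ler_sum => i _; rewrite !mxE.
rewrite -subr_ge0.
have -> : 2 * c1 ^+ 2 * e i 0 ^+ 2 + 4 * b i 0 ^+ 2 + 4 * c2 ^+ 2 * u i 0 ^+ 2 -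
   (c1 * e i 0 + b i 0 - c2 * u i 0) ^+ 2 =
   (c1 * e i 0 - b i 0 + c2 * u i 0) ^+ 2 + 2 * (b i 0 + c2 * u i 0) ^+ 2 by ring.
by rewrite addr_ge0 ?sqr_ge0 // mulr_ge0 ?sqr_ge0.
Qed.

End alg.

Section meas.
Context {d : measure_display} {T : measurableType d} {R : realType}.

Definition mv {m n} (F : T -> 'M[R]_(m, n)) :=
  forall i j, measurable_fun setT (fun w => F w i j).

Lemma mv_add m n (F G : T -> 'M[R]_(m, n)) : mv F -> mv G -> mv (fun w => F w + G w).
Proof.
move=> hF hG i j; rewrite (_ : (fun w => _) = (fun w => F w i j + G w i j)).
  exact: measurable_funD.
by apply/funext => w; rewrite mxE.
Qed.

Lemma mv_opp m n (F : T -> 'M[R]_(m, n)) : mv F -> mv (fun w => - F w).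
Proof.
move=> hF i j; rewrite (_ : (fun w => _) = (fun w => - F w i j)).
  exact: measurableT_comp.
by apply/funext => w; rewrite mxE.
Qed.

Lemma mv_sub m n (F G : T -> 'M[R]_(m, n)) : mv F -> mv G -> mv (fun w => F w - G w).
Proof. by move=> hF hG; apply: mv_add => //; exact: mv_opp. Qed.

Lemma mv_scale m n (c : R) (F : T -> 'M[R]_(m, n)) : mv F -> mv (fun w => c *: F w).
Proof.
move=> hF i j; rewrite (_ : (fun w => _) = (fun w => c * F w i j)).
  exact: measurable_funM.
by apply/funext => w; rewrite mxE.
Qed.

Lemma mv_cst m n (A : 'M[R]_(m, n)) : mv (fun _ => A).
Proof. by move=> i j; exact: measurable_cst. Qed.

Lemma mv_mul m n p (F : T -> 'M[R]_(m, n)) (G : T -> 'M[R]_(n, p)) :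
  mv F -> mv G -> mv (fun w => F w *m G w).
Proof.
move=> hF hG i j.
rewrite (_ : (fun w => _) = (fun w => \sum_(k < n) F w i k * G w k j)).
  apply: measurable_sum => k; exact: measurable_funM.
by apply/funext => w; rewrite mxE.
Qed.

Lemma mv_posq (F : T -> 'cV[R]_(3 + 3)) : mv F -> mv (fun w => posq (F w)).
Proof.
move=> hF i j; rewrite (_ : (fun w => _) = (fun w => F w (lshift 3 i) j)) //.
by apply/funext => w; rewrite mxE.
Qed.

Lemma mv_velq (F : T -> 'cV[R]_(3 + 3)) : mv F -> mv (fun w => velq (F w)).
Proof.
move=> hF i j; rewrite (_ : (fun w => _) = (fun w => F w (rshift 3 i) j)) //.
by apply/funext => w; rewrite mxE.
Qed.

Lemma mv_sqnorm n (F : T -> 'cV[R]_n) : mv F ->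
  measurable_fun setT (fun w => sqnorm (F w)).
Proof.
move=> hF; rewrite /sqnorm; apply: measurable_sum => i.
exact: measurable_funX.
Qed.

End meas.

Section gauss.
Context {R : realType}.

Lemma sq_pdf_le (s x : R) : s != 0 ->
  x ^+ 2 * normal_pdf (0:R) s x <=
  (4 * s ^+ 2 * normal_peak s / normal_peak (s * Num.sqrt 2)) *
    normal_pdf 0 (s * Num.sqrt 2) x.
Proof.
move=> s0.
have s20 : s * Num.sqrt 2 != 0 by rewrite mulf_neq0 // gt_eqF // sqrtr_gt0.
rewrite !normal_pdfE //= /normal_fun !subr0.
have pk := normal_peak_gt0 s0.
have pk2 := normal_peak_gt0 s20.
set y := x ^+ 2 / (s ^+ 2 *+ 4).
have s2 : 0 < s ^+ 2 by rewrite exprn_even_gt0.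
have e1 : - x ^+ 2 / (s ^+ 2 *+ 2) = - y + - y.
  by rewrite /y; field.
have e2 : - x ^+ 2 / ((s * Num.sqrt 2) ^+ 2 *+ 2) = - y.
  rewrite exprMn sqr_sqrtr // /y; field; by [].
rewrite e1 e2 expRD.
have hx : x ^+ 2 = 4 * s ^+ 2 * y.
  rewrite /y; field; by [].
have y0 : 0 <= y by rewrite /y divr_ge0 // ?sqr_ge0 // mulrn_wge0 // ltW.
have hy : y <= expR y.
  by apply: le_trans (expR_ge1Dx y); rewrite lerDr.
have hy1 : y * expR (- y) <= 1.
  by rewrite expRN ler_pdivrMr ?expR_gt0 // mul1r.
rewrite hx.
have -> : 4 * s ^+ 2 * normal_peak s / normal_peak (s * Num.sqrt 2) *
  (normal_peak (s * Num.sqrt 2) * expR (- y)) = 4 * s ^+ 2 * normal_peak s * expR (- y).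
  by field; rewrite gt_eqF.
have -> : 4 * s ^+ 2 * y * (normal_peak s * (expR (- y) * expR (- y))) =
  (4 * s ^+ 2 * normal_peak s * expR (- y)) * (y * expR (- y)) by ring.
rewrite -[X in _ <= X]mulr1 ler_wpM2l //.
apply: mulr_ge0; last exact: expR_ge0. apply: mulr_ge0; last exact: ltW. apply: mulr_ge0 => //. exact: ltW.
Qed.

Local Open Scope ereal_scope.
Lemma normal_sq_fin (s : R) : (s != 0)%R ->
  \int[normal_prob (0:R) s]_x ((x ^+ 2)%R)%:E < +oo.
Proof.
move=> s0.
have dom := normal_prob_dominates (0:R) s.
rewrite -(Radon_Nikodym_SigmaFinite.change_of_variables dom); last first.
- by apply/measurable_EFinP; apply: measurable_funX; exact: measurable_id.
- by [].
- by move=> x; rewrite lee_fin sqr_ge0.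
set RN := Radon_Nikodym_SigmaFinite.f _ _.
have mpdf : measurable_fun setT (fun x => (normal_pdf (0:R) s x)%:E).
  by apply/measurable_EFinP; exact: measurable_normal_pdf.
have mRN : measurable_fun setT RN.
  exact: measurable_int (Radon_Nikodym_SigmaFinite.f_integrable dom).
have mx2 : measurable_fun setT (fun x : R => ((x ^+ 2)%R)%:E).
  by apply/measurable_EFinP; apply: measurable_funX; exact: measurable_id.
have ae : ae_eq lebesgue_measure setT RN (fun x => (normal_pdf (0:R) s x)%:E).
  apply: integral_ae_eq => //.
  - exact: Radon_Nikodym_SigmaFinite.f_integrable.
  - move=> E _ mE; rewrite -Radon_Nikodym_SigmaFinite.f_integral //.
apply: (le_lt_trans (y := \int[lebesgue_measure]_(x in [set: R]) ((x ^+ 2)%:E * (normal_pdf (0:R) s x)%:E))).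
  rewrite le_eqVlt; apply/orP; left; apply/eqP; apply: ae_eq_integral => //.
  - exact: emeasurable_funM.
  - exact: emeasurable_funM.
  - exact: ae_eqe_mul2l.
set c := (4 * s ^+ 2 * normal_peak s / normal_peak (s * Num.sqrt 2))%R.
have s20 : (s * Num.sqrt 2 != 0)%R by rewrite mulf_neq0 // gt_eqF // sqrtr_gt0.
apply: (le_lt_trans (y := \int[lebesgue_measure]_(x in [set: R]) (c%:E * (normal_pdf (0:R) (s * Num.sqrt 2) x)%:E))).
  apply: ge0_le_integral => //.
  - by move=> x _; rewrite -EFinM lee_fin mulr_ge0 ?sqr_ge0 ?normal_pdf_ge0.
  - exact: emeasurable_funM.
  - apply: emeasurable_funM => //.
    by apply/measurable_EFinP; exact: measurable_normal_pdf.
  - by move=> x _; rewrite -!EFinM lee_fin sq_pdf_le.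
rewrite ge0_integralZl //; first by rewrite integral_normal_pdf mule1 ltry.
all: try (by move=> x _; rewrite lee_fin normal_pdf_ge0).
all: try (by apply/measurable_EFinP; exact: measurable_normal_pdf).
rewrite lee_fin /c mulr_ge0 // ?invr_ge0 ?normal_peak_ge0 // mulr_ge0 ?normal_peak_ge0 //.
by rewrite mulr_ge0 // sqr_ge0.
Qed.
End gauss.

Section lawsec.
Context {d : measure_display} {T : measurableType d} {R : realType}.
Local Open Scope ereal_scope.

Lemma E_sq_law (P : probability T R) (X : T -> R) (s : R) :
  measurable_fun setT X ->
  (forall A, measurable A -> P (X @^-1` A) = normal_prob 0%R s A) ->
  \int[P]_w ((X w ^+ 2)%R)%:E = \int[normal_prob 0%R s]_x ((x ^+ 2)%R)%:E.
Proof.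
move=> mX law.
have mX' : measurable_fun (T:=T) (U:=measurableTypeR R) setT X := mX.
have mf : measurable_fun (T:=measurableTypeR R) setT (fun y : R => ((y ^+ 2)%R)%:E).
  have mf0 : measurable_fun setT (fun y : R => ((y ^+ 2)%R)%:E).
    by apply/measurable_EFinP; apply: measurable_funX; exact: measurable_id.
  exact: mf0.
have H := @ge0_integral_pushforward _ _ T (measurableTypeR R) R X mX' P setT (fun y : R => ((y ^+ 2)%R)%:E)
  measurableT mf (fun y _ => sqr_ge0 y).
rewrite preimage_setT in H.
rewrite [LHS](_ : _ = \int[P]_(x in setT) ((fun y : R => ((y ^+ 2)%R)%:E) \o X) x) //.
rewrite -H.
apply: eq_measure_integral => A mA _.
rewrite /pushforward. exact: (law A mA).
Qed.
End lawsec.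

Theorem mainTheorem2 (d : measure_display) (T : measurableType d)
  (R : realType) (P : probability T R)
  (t alpha shat scheck : R) (W : 'M[R]_3) (bqs : 'cV[R]_3)
  (Ups Upshat : nat -> T -> 'cV[R]_(3 + 3))
  (Rot : nat -> T -> 'M[R]_3) (ubar : nat -> T -> 'cV[R]_3) :
  0 < t ->
  0 < shat -> 0 < scheck -> loewner_bounds W shat scheck ->
  (forall k w, is_SO3 (Rot k w)) ->
  (* measurability of the primitive random quantities *)
  (forall i, measurable_fun setT (fun w => Ups 0%N w i 0)) ->
  (forall k i, measurable_fun setT (fun w => Upshat k w i 0)) ->
  (forall k i j, measurable_fun setT (fun w => Rot k w i j)) ->
  (forall k i, measurable_fun setT (fun w => ubar k w i 0)) ->
  (* target acceleration: zero-mean Gaussian, covariance W, independent of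
     the other quantities at time k *)
  (forall k, gaussian0 P (ubar k) W) ->
  (forall k, indep_families P (fun i : 'I_3 => fun w => ubar k w i 0)
               (time_k_coords (Ups k) (Upshat k) (Rot k) (Rot k.+1))) ->
  (* closed-loop dynamics *)
  (forall k w, Ups k.+1 w =
     Amat t *m Ups k w +
     Bmat t *m (Rot k w *m control alpha t (Rot k w) (Upshat k w) bqs
                - ubar k w)) ->
  (* finite initial mean-square tracking error *)
  ('E_P[fun w => sqnorm (posq (Ups 0%N w) - Rot 0%N w *m bqs)] < +oo)%E ->
  (* sigma < oo *)
  (ereal_sup (range (fun k => 2%:E *
     'E_P[fun w => sqnorm (alphabar alpha t *m (Ups k w - Upshat k w)
                           + (Rot k w - Rot k.+1 w) *m bqs)]))%E < +oo)%E ->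
  1 - 1 / Num.sqrt 2 < alpha < 1 + 1 / Num.sqrt 2 ->
  2 * (1 - alpha) ^+ 2 - 1 < 0 /\
  exists M : R, forall k,
    ('E_P[fun w => sqnorm (posq (Ups k w) - Rot k w *m bqs)] <= M%:E)%E.
Proof.
move=> t0 sh0 sc0 [Wsym Wb] SO mU0 mUh0 mRot mub0 gauss _ dyn E0fin sigfin
  /andP[a1 a2].
have hrho : 2 * (1 - alpha) ^+ 2 - 1 < 0.
  set r := 1 / Num.sqrt 2 in a1 a2.
  have r2 : r ^+ 2 = 1 / 2.
    by rewrite /r expr_div_n expr1n sqr_sqrtr.
  nra.
split => //.
have EE : forall f : T -> R, ('E_P[f])%E = (\int[P]_w (f w)%:E)%E.
  by move=> f; rewrite unlock.
rewrite !EE in E0fin *.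
have tn0 : t != 0 by rewrite gt_eqF.
have hu : forall k w, Rot k w \in unitmx.
  by move=> k w; case: (SO k w) => _ hd; rewrite unitmxE hd unitr1.
pose e := fun k w => posq (Ups k w) - Rot k w *m bqs.
pose xi := fun k w => alphabar alpha t *m (Ups k w - Upshat k w)
                      + (Rot k w - Rot k.+1 w) *m bqs.
have stepE : forall k w, e k.+1 w =
    (1 - alpha) *: e k w + xi k w - (t ^+ 2 / 2) *: ubar k w.
  by move=> k w; rewrite /e dyn step_identity.
have mRv : forall k, mv (Rot k) by move=> k i j; exact: mRot.
have mUh : forall k, mv (Upshat k) by move=> k i j; rewrite (ord1 j); exact: mUh0.
have mub : forall k, mv (ubar k) by move=> k i j; rewrite (ord1 j); exact: mub0.
have mU : forall k, mv (Ups k).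
  elim => [|k IH]; first by move=> i j; rewrite (ord1 j); exact: mU0.
  have -> : Ups k.+1 = fun w => Amat t *m Ups k w + Bmat t *m
      ((- ((2 * alpha / t ^+ 2) *: (posq (Upshat k w) - Rot k w *m bqs))
        - (2 / t) *: velq (Upshat k w)) - ubar k w).
    by apply/funext => w; rewrite dyn Rcontrol.
  apply: mv_add; first by apply: mv_mul => //; exact: mv_cst.
  apply: mv_mul; first exact: mv_cst.
  apply: mv_sub => //; apply: mv_sub.
    apply: mv_opp; apply: mv_scale; apply: mv_sub; first exact: mv_posq.
    by apply: mv_mul => //; exact: mv_cst.
  by apply: mv_scale; exact: mv_velq.
have me : forall k, mv (e k).
  move=> k; apply: mv_sub; first exact: mv_posq.
  by apply: mv_mul => //; exact: mv_cst.
have mxi : forall k, mv (xi k).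
  move=> k; apply: mv_add.
    by apply: mv_mul; [exact: mv_cst | exact: mv_sub].
  by apply: mv_mul; [exact: mv_sub | exact: mv_cst].
pose s := fun i : 'I_3 => Num.sqrt (W i i).
have law : forall k (i : 'I_3) A, measurable A ->
    P ((fun w => ubar k w i 0) @^-1` A) = normal_prob 0 (s i) A.
  move=> k i A mA.
  have nz : delta_mx i 0 != 0 :> 'cV[R]_3.
    apply/eqP => /matrixP /(_ i 0); rewrite !mxE !eqxx /=.
    by move/eqP; rewrite oner_eq0.
  have := gauss k (delta_mx i 0) nz A mA.
  have -> : (fun w => ((delta_mx i 0 : 'cV[R]_3)^T *m ubar k w) 0 0) = fun w => ubar k w i 0.
    by apply/funext => w; rewrite trmx_delta -rowE mxE.
  have -> : ((delta_mx i 0 : 'cV[R]_3)^T *m W *m (delta_mx i 0 : 'cV[R]_3)) 0 0 = W i i.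
    by rewrite trmx_delta -rowE -colE !mxE.
  done.
have spos : forall i, s i != 0.
  move=> i; rewrite /s gt_eqF // sqrtr_gt0.
  have /andP[h _] := Wb (delta_mx i 0).
  move: h; rewrite trmx_delta -!rowE -colE !mxE !eqxx /= mulr1.
  exact: lt_le_trans.
pose Ub := (\sum_(i < 3) \int[normal_prob 0 (s i)]_x ((x ^+ 2)%R)%:E)%E.
have EubE : forall k, (\int[P]_w (sqnorm (ubar k w))%:E = Ub)%E.
  move=> k; rewrite /sqnorm.
  under eq_integral do rewrite -sumEFin.
  rewrite ge0_integral_sum //.
  - apply: eq_bigr => i _; apply: E_sq_law; first exact: mub0.
    exact: law.
  - move=> i; apply/measurable_EFinP; apply: measurable_funX; exact: mub0.
  - by move=> i w _; rewrite lee_fin sqr_ge0.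
have Ubfin : Ub \is a fin_num.
  rewrite ge0_fin_numE; last by apply: sume_ge0 => i _; apply: integral_ge0 => x _; rewrite lee_fin sqr_ge0.
  by apply: lte_sum_pinfty => i _; exact: normal_sq_fin.
set sup := ereal_sup _ in sigfin.
have xib : forall k, (\int[P]_w (sqnorm (xi k w))%:E <= (fine sup / 2)%:E)%E.
  move=> k.
  have h2 : (sup <= (fine sup)%:E)%E.
    by move: sigfin; case: sup => [r| |] _ //=; rewrite leNye.
  have h1 : (2%:E * \int[P]_w (sqnorm (xi k w))%:E <= sup)%E.
    rewrite -EE; apply: ereal_sup_ubound; by exists k.
  have h0 : (0 <= \int[P]_w (sqnorm (xi k w))%:E)%E.
    by apply: integral_ge0 => w _; rewrite lee_fin sumr_ge0 // => i _; rewrite sqr_ge0.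
  move: h1 h2 h0; case: (\int[P]_w (sqnorm (xi k w))%:E)%E => [r| |] h1 h2 h0 //.
    rewrite lee_fin; have := le_trans h1 h2; rewrite -EFinM lee_fin; lra.
  by have := le_trans h1 h2; rewrite mulry gtr0_sg // mul1e leye_eq.
pose rho := 2 * (1 - alpha) ^+ 2.
pose c2 := t ^+ 2 / 2.
pose K := 4 * (fine sup / 2) + 4 * c2 ^+ 2 * fine Ub.
pose Ek := fun k => (\int[P]_w (sqnorm (e k w))%:E)%E.
have mse : forall k, measurable_fun setT (fun w => sqnorm (e k w)).
  by move=> k; apply: mv_sqnorm.
have msxi : forall k, measurable_fun setT (fun w => sqnorm (xi k w)).
  by move=> k; apply: mv_sqnorm.
have msub : forall k, measurable_fun setT (fun w => sqnorm (ubar k w)).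
  by move=> k; apply: mv_sqnorm.
have sq0 : forall n (v : 'cV[R]_n), 0 <= sqnorm v.
  by move=> n v; rewrite /sqnorm sumr_ge0 // => i _; rewrite sqr_ge0.
have rho0 : 0 <= rho by rewrite /rho mulr_ge0 // sqr_ge0.
have rec : forall k, (Ek k.+1 <= rho%:E * Ek k + K%:E)%E.
  move=> k; rewrite /Ek.
  under eq_integral do rewrite stepE.
  apply: (@le_trans _ _ (\int[P]_w (rho * sqnorm (e k w) + 4 * sqnorm (xi k w)
        + 4 * c2 ^+ 2 * sqnorm (ubar k w))%:E)%E).
    apply: ge0_le_integral => //.
    - by move=> w _; rewrite lee_fin.
    - apply/measurable_EFinP; apply: mv_sqnorm; apply: mv_sub; last exact: mv_scale.
      by apply: mv_add; [exact: mv_scale | exact: mxi].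
    - apply/measurable_EFinP; apply: measurable_funD; first apply: measurable_funD.
      + by apply: measurable_funM => //; exact: mse.
      + by apply: measurable_funM => //; exact: msxi.
      + by apply: measurable_funM => //; exact: msub.
    - by move=> w _; rewrite lee_fin /rho /c2 sqnorm_step.
  under eq_integral do rewrite !EFinD (EFinM rho) (EFinM 4) (EFinM (4 * c2 ^+ 2)).
  rewrite ge0_integralD //; last first.
  - by apply/measurable_EFinP; apply: measurable_funM => //; exact: msub.
  - by move=> w _; rewrite -EFinM lee_fin mulr_ge0 // mulr_ge0 // sqr_ge0.
  - apply/measurable_EFinP; apply: measurable_funD.
      by apply: measurable_funM => //; exact: mse.
    by apply: measurable_funM => //; exact: msxi.
  - by move=> w _; rewrite -!EFinM -EFinD lee_fin addr_ge0 // mulr_ge0.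
  rewrite ge0_integralD //; last first.
  - by apply/measurable_EFinP; apply: measurable_funM => //; exact: msxi.
  - by move=> w _; rewrite -EFinM lee_fin mulr_ge0.
  - by apply/measurable_EFinP; apply: measurable_funM => //; exact: mse.
  - by move=> w _; rewrite -EFinM lee_fin mulr_ge0.
  rewrite !ge0_integralZl //.
  all: try (by move=> w _; rewrite lee_fin).
  all: try (by apply/measurable_EFinP).
  all: try (by rewrite lee_fin mulr_ge0 // sqr_ge0).
  rewrite EubE -(fineK Ubfin) /K !EFinD -addeA; apply: leeD2l.
  apply: leeD; last by rewrite -EFinM.
  by rewrite EFinM; apply: lee_wpmul2l; [rewrite lee_fin | exact: xib].
have Ek0 : forall k, (0 <= Ek k)%E.
  by move=> k; apply: integral_ge0 => w _; rewrite lee_fin.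
have Ek0fin : Ek 0%N \is a fin_num by rewrite ge0_fin_numE.
have rho1 : 0 < 1 - rho by rewrite /rho; lra.
exists (Num.max (fine (Ek 0%N)) (K / (1 - rho))) => k.
rewrite EE; change (Ek k <= (Num.max (fine (Ek 0%N)) (K / (1 - rho)))%:E)%E.
set M := Num.max _ _.
have hM0 : fine (Ek 0%N) <= M by rewrite le_max lexx.
have hM : K / (1 - rho) <= M by rewrite le_max lexx orbT.
elim: k => [|k IH].
  by rewrite -(fineK Ek0fin) lee_fin.
apply: le_trans (rec k) _.
apply: (@le_trans _ _ (rho%:E * M%:E + K%:E)%E).
  by apply: leeD2r; apply: lee_wpmul2l; rewrite ?lee_fin.
rewrite -EFinM -EFinD lee_fin.
move: hM; rewrite ler_pdivrMr // => hM.
nra.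
Qed.
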